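(* Assume (H1), (H2) and the sequence setting (Seq), and let $x\in\mathrm{dom}\,J$ with $\partial J(x)\neq\emptyset$. Then the sequence $\big(\nabla_x S_H(x_k,t_{1,k},\dots,t_{N,k})\big)_k$ is bounded, and each of its cluster points belongs to $\partial J(x)$.
   Context: Hypothesis (H1): each $H_j:\mathbb{R}^n\to\mathbb{R}$ ($j=1,\dots,N$) is finite-valued, convex and 1-coercive (i.e. $H_j(p)/\|p\|\to+\infty$ as $\|p\|\to\infty$), and at least one $H_j$ is strictly convex. Hypothesis (H2): $J:\mathbb{R}^n\to\mathbb{R}\cup\{+\infty\}$ is proper, convex and lower semicontinuous. $J^*$ is the Legendre transform of $J$. Hopf formula: $S_H(y,t_1,\dots,t_N)=\sup_{p\in\mathbb{R}^n}\big(\langle p,y\rangle-J^*(p)-\sum_{j}t_jH_j(p)\big)$ for $t_1,\dots,t_N\ge0$; under (H1)-(H2) and $t_j>0$ for all $j$, $S_H(\cdot,t_1,\dots,t_N)$ is finite and differentiable in $y$, and $\nabla_y S_H$ is the unique maximizer in the Hopf formula. Sequence setting (Seq): $x\in\mathbb{R}^n$; for each $j\in\{1,\dots,N\}$ and $k\in\mathbb{N}$, $t_{j,k}>0$ and $v_{j,k}\in\mathbb{R}^n$, with $t_{j,k}\to0$, $v_{j,k}\to v_{j,\infty}$ and $t_{j,k}/t_{1,k}\to\alpha_{j,\infty}\in\mathbb{R}$ as $k\to\infty$; and $x_k=x+\sum_{j=1}^N t_{j,k}v_{j,k}$. *)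

(* Defs.v *)
From Stdlib Require Import Reals Lra Classical ClassicalEpsilon.
From Stdlib Require Fin.
Open Scope R_scope.

Definition Vec (n : nat) := Fin.t n -> R.

Fixpoint dot (n : nat) : Vec n -> Vec n -> R :=
  match n with
  | O => fun _ _ => 0
  | S m => fun p q => p Fin.F1 * q Fin.F1
                      + dot m (fun i => p (Fin.FS i)) (fun i => q (Fin.FS i))
  end.

Definition vnorm {n} (p : Vec n) : R := sqrt (dot n p p).
Definition vadd {n} (p q : Vec n) : Vec n := fun i => p i + q i.
Definition vsub {n} (p q : Vec n) : Vec n := fun i => p i - q i.
Definition vscale {n} (a : R) (p : Vec n) : Vec n := fun i => a * p i.
Definition vzero {n} : Vec n := fun _ => 0.

Fixpoint rsum (N : nat) (f : nat -> R) : R :=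
  match N with O => 0 | S m => rsum m f + f m end.
Fixpoint vsum {n} (N : nat) (f : nat -> Vec n) : Vec n :=
  match N with O => vzero | S m => vadd (vsum m f) (f m) end.

(* R ∪ {+oo}: None stands for +oo *)
Definition ERp := option R.

(* supremum of a set of reals in R ∪ {+oo}; None (+oo) if unbounded above.
   (Only applied to nonempty sets below.) *)
Definition sup_ext (E : R -> Prop) : ERp :=
  match excluded_middle_informative (bound E /\ exists r, E r) with
  | left h => Some (proj1_sig (completeness E (proj1 h) (proj2 h)))
  | right _ => None
  end.

Definition convex {n} (H : Vec n -> R) : Prop :=
  forall p q lam, 0 <= lam <= 1 ->
    H (vadd (vscale lam p) (vscale (1 - lam) q)) <= lam * H p + (1 - lam) * H q.

Definition strictly_convex {n} (H : Vec n -> R) : Prop :=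
  forall p q lam, p <> q -> 0 < lam < 1 ->
    H (vadd (vscale lam p) (vscale (1 - lam) q)) < lam * H p + (1 - lam) * H q.

(* H(p)/||p|| -> +oo as ||p|| -> +oo *)
Definition one_coercive {n} (H : Vec n -> R) : Prop :=
  forall M, exists R0, forall p, R0 <= vnorm p -> M * vnorm p <= H p.

Definition proper {n} (J : Vec n -> ERp) : Prop := exists x a, J x = Some a.

Definition convex_ext {n} (J : Vec n -> ERp) : Prop :=
  forall x y a b lam, 0 <= lam <= 1 -> J x = Some a -> J y = Some b ->
    exists c, J (vadd (vscale lam x) (vscale (1 - lam) y)) = Some c /\
              c <= lam * a + (1 - lam) * b.

Definition lt_ext (r : R) (v : ERp) : Prop :=
  match v with None => True | Some a => r < a end.

Definition lsc_ext {n} (J : Vec n -> ERp) : Prop :=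
  forall x r, lt_ext r (J x) ->
    exists d, 0 < d /\ forall y, vnorm (vsub y x) < d -> lt_ext r (J y).

Definition legendre {n} (J : Vec n -> ERp) (p : Vec n) : ERp :=
  sup_ext (fun r => exists x a, J x = Some a /\ r = dot n p x - a).

Definition hopf {n} (N : nat) (H : nat -> Vec n -> R) (J : Vec n -> ERp)
    (t : nat -> R) (y : Vec n) : ERp :=
  sup_ext (fun r => exists p w, legendre J p = Some w /\
             r = dot n p y - w - rsum N (fun j => t j * H j p)).

Definition has_gradient {n} (f : Vec n -> ERp) (y g : Vec n) : Prop :=
  exists a, f y = Some a /\
    forall eps, 0 < eps -> exists d, 0 < d /\
      forall z, vnorm (vsub z y) < d ->
        exists v, f z = Some v /\
          Rabs (v - a - dot n g (vsub z y)) <= eps * vnorm (vsub z y).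

Definition in_dom {n} (J : Vec n -> ERp) (x : Vec n) : Prop := exists a, J x = Some a.
Definition subdiff {n} (J : Vec n -> ERp) (x p : Vec n) : Prop :=
  exists a, J x = Some a /\
    forall y b, J y = Some b -> a + dot n p (vsub y x) <= b.

Definition vbounded {n} (g : nat -> Vec n) : Prop :=
  exists M, forall k, vnorm (g k) <= M.
Definition cluster_point {n} (g : nat -> Vec n) (c : Vec n) : Prop :=
  forall eps, 0 < eps -> forall K, exists k, (K <= k)%nat /\ vnorm (vsub (g k) c) < eps.
Definition vcv {n} (u : nat -> Vec n) (l : Vec n) : Prop :=
  forall eps, 0 < eps -> exists K, forall k, (K <= k)%nat -> vnorm (vsub (u k) l) < eps.

(* Main.v *)
Require Import Defs.
From Stdlib Require Import Reals.
From Stdlib Require Import Lra Lia FunctionalExtensionality ClassicalEpsilon.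
Open Scope R_scope.


Lemma dot_add_r : forall n (p q r : Vec n), dot n p (vadd q r) = dot n p q + dot n p r.
Proof.
  induction n; intros; simpl; [lra|].
  specialize (IHn (fun i => p (Fin.FS i)) (fun i => q (Fin.FS i)) (fun i => r (Fin.FS i))).
  unfold vadd in *; cbv beta in *. rewrite IHn; ring.
Qed.

Lemma dot_scale_r : forall n a (p q : Vec n), dot n p (vscale a q) = a * dot n p q.
Proof.
  induction n; intros; simpl; [lra|].
  specialize (IHn a (fun i => p (Fin.FS i)) (fun i => q (Fin.FS i))).
  unfold vscale in *; cbv beta in *. rewrite IHn; ring.
Qed.

Lemma dot_comm : forall n (p q : Vec n), dot n p q = dot n q p.
Proof.
  induction n; intros; simpl; [lra|].
  rewrite IHn; ring.
Qed.

Lemma dot_zero_r : forall n (p : Vec n), dot n p vzero = 0.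
Proof.
  induction n; intros; simpl; [lra|].
  specialize (IHn (fun i => p (Fin.FS i))). unfold vzero in *. rewrite IHn; ring.
Qed.

Lemma dot_nonneg : forall n (p : Vec n), 0 <= dot n p p.
Proof.
  induction n; intros; simpl; [lra|].
  specialize (IHn (fun i => p (Fin.FS i))). nra.
Qed.

Lemma dot_sub_r n (p q r : Vec n) : dot n p (vsub q r) = dot n p q - dot n p r.
Proof.
  replace (vsub q r) with (vadd q (vscale (-1) r)).
  - rewrite dot_add_r, dot_scale_r; ring.
  - extensionality i; unfold vsub, vadd, vscale; ring.
Qed.

Lemma dot_add_l n (p q r : Vec n) : dot n (vadd q r) p = dot n q p + dot n r p.
Proof. rewrite !(dot_comm n _ p); apply dot_add_r. Qed.
Lemma dot_scale_l n a (p q : Vec n) : dot n (vscale a q) p = a * dot n q p.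
Proof. rewrite !(dot_comm n _ p); apply dot_scale_r. Qed.
Lemma dot_sub_l n (p q r : Vec n) : dot n (vsub q r) p = dot n q p - dot n r p.
Proof. rewrite !(dot_comm n _ p); apply dot_sub_r. Qed.

Lemma vnorm_nonneg n (p : Vec n) : 0 <= vnorm p.
Proof. apply sqrt_pos. Qed.

Lemma vnorm_sq n (p : Vec n) : vnorm p * vnorm p = dot n p p.
Proof. apply sqrt_sqrt, dot_nonneg. Qed.

Lemma cs_sq n (p q : Vec n) : dot n p q * dot n p q <= dot n p p * dot n q q.
Proof.
  set (A := dot n p p). set (B := dot n q q). set (C := dot n p q).
  assert (Hq : forall l, 0 <= A - 2 * l * C + l * l * B).
  { intro l. pose proof (dot_nonneg n (vsub p (vscale l q))) as H0.
    rewrite dot_sub_l, !dot_sub_r, !dot_scale_r, !dot_scale_l in H0.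
    rewrite (dot_comm n q p) in H0. unfold A, B, C. nra. }
  assert (HA : 0 <= A) by apply dot_nonneg.
  assert (HB : 0 <= B) by apply dot_nonneg.
  destruct (Req_dec B 0) as [HB0|HB0].
  - destruct (Req_dec C 0) as [HC|HC].
    + rewrite HC; nra.
    + specialize (Hq ((A + 1) / (2 * C))). rewrite HB0 in Hq.
      replace (A - 2 * ((A + 1) / (2 * C)) * C + (A + 1) / (2 * C) * ((A + 1) / (2 * C)) * 0)
        with (-1) in Hq by (field; auto). lra.
  - specialize (Hq (C / B)).
    assert (0 <= A - C * C / B).
    { replace (A - C * C / B) with (A - 2 * (C / B) * C + C / B * (C / B) * B) by (field; auto). auto. }
    assert (0 < B) by lra.
    apply Rmult_le_compat_r with (r := B) in H; [|lra].
    replace ((A - C * C / B) * B) with (A * B - C * C) in H by (field; auto). nra.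
Qed.

Lemma cs_abs n (p q : Vec n) : Rabs (dot n p q) <= vnorm p * vnorm q.
Proof.
  unfold vnorm. rewrite <- sqrt_mult by apply dot_nonneg.
  rewrite <- sqrt_Rsqr_abs. apply sqrt_le_1_alt. unfold Rsqr. apply cs_sq.
Qed.

Lemma cs n (p q : Vec n) : dot n p q <= vnorm p * vnorm q.
Proof. pose proof (cs_abs n p q). pose proof (Rle_abs (dot n p q)). lra. Qed.

Lemma vnorm_add n (p q : Vec n) : vnorm (vadd p q) <= vnorm p + vnorm q.
Proof.
  pose proof (vnorm_nonneg n p). pose proof (vnorm_nonneg n q).
  apply Rsqr_incr_0_var; [|lra]. unfold Rsqr.
  rewrite vnorm_sq, dot_add_l, !dot_add_r.
  pose proof (cs n p q). rewrite (dot_comm n q p).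
  pose proof (vnorm_sq n p). pose proof (vnorm_sq n q). nra.
Qed.

Lemma vnorm_scale n a (p : Vec n) : vnorm (vscale a p) = Rabs a * vnorm p.
Proof.
  unfold vnorm. rewrite dot_scale_l, dot_scale_r, <- Rmult_assoc.
  rewrite sqrt_mult; [| nra | apply dot_nonneg].
  f_equal. rewrite <- sqrt_Rsqr_abs. reflexivity.
Qed.

Lemma vnorm_zero n : vnorm (@vzero n) = 0.
Proof. unfold vnorm. rewrite dot_zero_r. apply sqrt_0. Qed.

Lemma vsum_norm n : forall N (f : nat -> Vec n), vnorm (vsum N f) <= rsum N (fun j => vnorm (f j)).
Proof.
  induction N; intros; simpl.
  - rewrite vnorm_zero; lra.
  - pose proof (vnorm_add n (vsum N f) (f N)). specialize (IHN f). lra.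
Qed.

Lemma dot_vsum_r n (p : Vec n) : forall N f, dot n p (vsum N f) = rsum N (fun j => dot n p (f j)).
Proof.
  induction N; intros; simpl.
  - apply dot_zero_r.
  - rewrite dot_add_r, IHN; ring.
Qed.

Lemma sup_some_lub E s : sup_ext E = Some s -> is_lub E s.
Proof.
  unfold sup_ext. destruct excluded_middle_informative as [h|h]; [|discriminate].
  intro e; injection e as <-. destruct completeness as [s Hs]; simpl; exact Hs.
Qed.

Lemma sup_exists E r0 B : E r0 -> (forall r, E r -> r <= B) -> exists s, sup_ext E = Some s.
Proof.
  intros H0 HB. unfold sup_ext. destruct excluded_middle_informative as [h|h].
  - eauto.
  - exfalso; apply h; split; [exists B; exact HB| eauto].
Qed.

Lemma rsum_le N f h : (forall j, (j < N)%nat -> f j <= h j) -> rsum N f <= rsum N h.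
Proof.
  induction N; intros Hf; simpl; [lra|].
  assert (rsum N f <= rsum N h) by (apply IHN; intros; apply Hf; lia).
  specialize (Hf N ltac:(lia)). lra.
Qed.

Lemma rsum_plus N f h : rsum N (fun j => f j + h j) = rsum N f + rsum N h.
Proof. induction N; simpl; [lra|]. rewrite IHN; ring. Qed.

Lemma rsum_scal N c f : rsum N (fun j => c * f j) = c * rsum N f.
Proof. induction N; simpl; [lra|]. rewrite IHN; ring. Qed.

Lemma rsum_const N c : rsum N (fun _ => c) = INR N * c.
Proof. induction N; simpl rsum; [simpl; lra|]. rewrite IHN, S_INR; ring. Qed.

Lemma rsum_nonneg N f : (forall j, (j < N)%nat -> 0 <= f j) -> 0 <= rsum N f.
Proof.
  intros Hf. assert (rsum N (fun _ => 0) <= rsum N f) by (apply rsum_le; auto).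
  rewrite rsum_const in H. lra.
Qed.

Lemma rsum_ge_term N f m : (forall j, (j < N)%nat -> 0 <= f j) -> (m < N)%nat -> f m <= rsum N f.
Proof.
  induction N; intros Hf Hm; [lia|]. simpl.
  destruct (Nat.eq_dec m N) as [->|Hne].
  - assert (0 <= rsum N f) by (apply rsum_nonneg; intros; apply Hf; lia). lra.
  - assert (f m <= rsum N f) by (apply IHN; [intros; apply Hf; lia | lia]).
    specialize (Hf N ltac:(lia)). lra.
Qed.

Lemma ev_all (P : nat -> nat -> Prop) N :
  (forall j, (j < N)%nat -> exists K, forall k, (K <= k)%nat -> P j k) ->
  exists K, forall j, (j < N)%nat -> forall k, (K <= k)%nat -> P j k.
Proof.
  induction N; intros HP.
  - exists O; intros; lia.
  - destruct IHN as [K1 HK1]; [intros; apply HP; lia|].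
    destruct (HP N ltac:(lia)) as [K2 HK2].
    exists (max K1 K2). intros j Hj k Hk.
    destruct (Nat.eq_dec j N) as [->|Hne]; [apply HK2; lia| apply HK1; lia].
Qed.

Lemma fin_bound K (f : nat -> R) : exists M, forall k, (k < K)%nat -> f k <= M.
Proof.
  induction K.
  - exists 0; intros; lia.
  - destruct IHK as [M HM]. exists (Rmax M (f K)). intros k Hk.
    destruct (Nat.eq_dec k K) as [->|Hne]; [apply Rmax_r|].
    apply Rle_trans with M; [apply HM; lia| apply Rmax_l].
Qed.

Lemma fin_lb n N (H : nat -> Vec n -> R) :
  (forall j, (j < N)%nat -> exists L, forall p, -L <= H j p) ->
  exists L, 0 <= L /\ forall j, (j < N)%nat -> forall p, -L <= H j p.
Proof.
  induction N; intros HP.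
  - exists 0; split; [lra| intros; lia].
  - destruct IHN as [L1 [HL1 HL1']]; [intros; apply HP; lia|].
    destruct (HP N ltac:(lia)) as [L2 HL2].
    exists (Rmax L1 L2). split; [apply Rle_trans with L1; [lra|apply Rmax_l]|].
    intros j Hj p.
    destruct (Nat.eq_dec j N) as [->|Hne].
    + specialize (HL2 p). pose proof (Rmax_r L1 L2). lra.
    + specialize (HL1' j ltac:(lia) p). pose proof (Rmax_l L1 L2). lra.
Qed.

Lemma convex_coercive_lb n (H : Vec n -> R) : convex H -> one_coercive H ->
  exists L, forall p, -L <= H p.
Proof.
  intros Hc Hco. destruct (Hco 0) as [R0 HR0].
  set (c := 3 * Rabs R0). set (r := (fun _ => c) : Vec n).
  exists (Rabs (H r)). intro p.
  destruct n as [|m].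
  - replace p with r. { pose proof (Rle_abs (- H r)) as E1. rewrite Rabs_Ropp in E1. lra. }
    extensionality i. inversion i.
  - assert (Hr : c <= vnorm r).
    { unfold vnorm. simpl. rewrite <- (sqrt_square c) at 1 by (unfold c; pose proof (Rabs_pos R0); lra).
      apply sqrt_le_1_alt. pose proof (dot_nonneg m (fun i : Fin.t m => r (Fin.FS i))). unfold r at 1 2. lra. }
    destruct (Rle_lt_dec R0 (vnorm p)) as [Hp|Hp].
    + specialize (HR0 p Hp). pose proof (Rabs_pos (H r)). lra.
    + set (q := vadd (vscale (1/2) p) (vscale (1 - 1/2) r)).
      assert (Hq : H q <= 1/2 * H p + (1 - 1/2) * H r) by (apply Hc; lra).
      assert (Hrq : r = vadd (vscale 2 q) (vscale (-1) p)).
      { extensionality i. unfold q, vadd, vscale. field. }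
      assert (vnorm r <= 2 * vnorm q + vnorm p).
      { rewrite Hrq at 1. eapply Rle_trans; [apply vnorm_add|].
        rewrite !vnorm_scale. rewrite (Rabs_right 2) by lra. rewrite (Rabs_left (-1)) by lra. lra. }
      assert (R0 <= vnorm q).
      { pose proof (Rle_abs R0). pose proof (Rabs_pos R0). unfold c in Hr. lra. }
      specialize (HR0 q H1). pose proof (Rle_abs (H r)). lra.
Qed.

Definition Tsum {n} N (H : nat -> Vec n -> R) (t : nat -> R) (p : Vec n) :=
  rsum N (fun j => t j * H j p).

Lemma leg_ge n (J : Vec n -> ERp) p w y b :
  legendre J p = Some w -> J y = Some b -> dot n p y - b <= w.
Proof.
  intros Hw Hy. apply sup_some_lub in Hw. apply Hw. exists y, b; auto.
Qed.

Lemma leg_subdiff n (J : Vec n -> ERp) x p a :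
  J x = Some a -> (forall y b, J y = Some b -> a + dot n p (vsub y x) <= b) ->
  exists w, legendre J p = Some w /\ w <= dot n p x - a.
Proof.
  intros Hx Hs.
  assert (Hub : forall r, (exists y b, J y = Some b /\ r = dot n p y - b) -> r <= dot n p x - a).
  { intros r [y [b [Hy ->]]]. specialize (Hs y b Hy). rewrite dot_sub_r in Hs. lra. }
  destruct (sup_exists _ (dot n p x - a) _ (ex_intro _ x (ex_intro _ a (conj Hx eq_refl))) Hub) as [w Hw].
  exists w; split; auto. apply sup_some_lub in Hw. apply Hw. exact Hub.
Qed.

Lemma hopf_ge n N H (J : Vec n -> ERp) t z p w s :
  legendre J p = Some w -> hopf N H J t z = Some s -> dot n p z - w - Tsum N H t p <= s.
Proof.
  intros Hw Hs. apply sup_some_lub in Hs. apply Hs. exists p, w; auto.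
Qed.

Lemma hopf_le n N H (J : Vec n -> ERp) t z B p0 w0 :
  legendre J p0 = Some w0 ->
  (forall p w, legendre J p = Some w -> dot n p z - w - Tsum N H t p <= B) ->
  exists s, hopf N H J t z = Some s /\ s <= B.
Proof.
  intros H0 HB.
  assert (Hub : forall r, (exists p w, legendre J p = Some w /\
             r = dot n p z - w - rsum N (fun j => t j * H j p)) -> r <= B).
  { intros r [p [w [Hp ->]]]. apply HB; auto. }
  destruct (sup_exists _ _ _ (ex_intro _ p0 (ex_intro _ w0 (conj H0 eq_refl))) Hub) as [s Hs].
  exists s; split; auto. apply sup_some_lub in Hs. apply Hs. exact Hub.
Qed.

Lemma hopf_convex n N H (J : Vec n -> ERp) t a1 a2 l al be ga :
  0 <= l <= 1 ->
  hopf N H J t a1 = Some al -> hopf N H J t a2 = Some be ->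
  hopf N H J t (vadd (vscale l a1) (vscale (1 - l) a2)) = Some ga ->
  ga <= l * al + (1 - l) * be.
Proof.
  intros Hl H1 H2 H3. apply sup_some_lub in H3. apply H3.
  intros r [p [w [Hp ->]]].
  pose proof (hopf_ge n N H J t a1 p w al Hp H1).
  pose proof (hopf_ge n N H J t a2 p w be Hp H2).
  unfold Tsum in *. rewrite dot_add_r, !dot_scale_r. nra.
Qed.

Lemma grad_sub n (S : Vec n -> ERp) y g a d s1 :
  (forall a1 a2 l al be ga, 0 <= l <= 1 -> S a1 = Some al -> S a2 = Some be ->
     S (vadd (vscale l a1) (vscale (1 - l) a2)) = Some ga -> ga <= l * al + (1 - l) * be) ->
  has_gradient S y g -> S y = Some a -> S (vadd y d) = Some s1 -> dot n g d <= s1 - a.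
Proof.
  intros Hcv [a' [Ha' Hg]] Ha Hd. rewrite Ha in Ha'. injection Ha' as <-.
  assert (Key : forall eps, 0 < eps -> dot n g d <= s1 - a + eps * (vnorm d + 1)).
  { intros eps Heps. destruct (Hg eps Heps) as [del [Hdel Hz]].
    pose proof (vnorm_nonneg n d) as Hnd.
    set (s := Rmin 1 (del / (2 * (vnorm d + 1)))).
    assert (Hs0 : 0 < s).
    { unfold s. apply Rmin_pos; [lra|]. apply Rdiv_lt_0_compat; lra. }
    assert (Hs1 : s <= 1) by apply Rmin_l.
    assert (Hs2 : s * vnorm d < del).
    { assert (s <= del / (2 * (vnorm d + 1))) by apply Rmin_r.
      apply Rmult_le_compat_r with (r := vnorm d) in H; [|lra].
      assert (del / (2 * (vnorm d + 1)) * vnorm d < del).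
      { unfold Rdiv. apply Rmult_lt_reg_r with (r := 2 * (vnorm d + 1)); [lra|].
        field_simplify; [nra|lra]. }
      lra. }
    assert (Hsub : vsub (vadd y (vscale s d)) y = vscale s d).
    { extensionality i. unfold vsub, vadd, vscale. ring. }
    assert (Hn : vnorm (vsub (vadd y (vscale s d)) y) = s * vnorm d).
    { rewrite Hsub, vnorm_scale, Rabs_right; lra. }
    destruct (Hz (vadd y (vscale s d))) as [vv [Hvv Habs]]; [lra|].
    rewrite Hn, Hsub, dot_scale_r in Habs.
    assert (Hconv : vv <= s * s1 + (1 - s) * a).
    { apply (Hcv (vadd y d) y s s1 a vv); [lra|auto|auto|].
      replace (vadd (vscale s (vadd y d)) (vscale (1 - s) y)) with (vadd y (vscale s d)); auto.
      extensionality i. unfold vadd, vscale. ring. }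
    pose proof (Rle_abs (- (vv - a - s * dot n g d))) as Ha1. rewrite Rabs_Ropp in Ha1.
    assert (s * dot n g d <= s * (s1 - a + eps * (vnorm d + 1))) by nra.
    apply Rmult_le_reg_l with s; lra. }
  destruct (Rle_lt_dec (dot n g d) (s1 - a)) as [Hle|Hlt]; auto.
  pose proof (vnorm_nonneg n d).
  specialize (Key ((dot n g d - (s1 - a)) / (2 * (vnorm d + 1)))).
  assert (Hp : 0 < (dot n g d - (s1 - a)) / (2 * (vnorm d + 1))) by (apply Rdiv_lt_0_compat; lra).
  specialize (Key Hp).
  replace ((dot n g d - (s1 - a)) / (2 * (vnorm d + 1)) * (vnorm d + 1))
    with ((dot n g d - (s1 - a)) / 2) in Key by (field; lra).
  lra.
Qed.

Theorem lemma3p4 (n N : nat) (H : nat -> Vec n -> R) (J : Vec n -> ERp)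
  (HH : forall j, (j < N)%nat -> convex (H j) /\ one_coercive (H j))
  (Hstrict : exists j, (j < N)%nat /\ strictly_convex (H j))
  (HJ : proper J /\ convex_ext J /\ lsc_ext J)
  (x : Vec n) (t : nat -> nat -> R) (v : nat -> nat -> Vec n)
  (vinf : nat -> Vec n) (alpha : nat -> R)
  (Ht_pos : forall j k, (j < N)%nat -> 0 < t j k)
  (Ht_cv : forall j, (j < N)%nat -> Un_cv (t j) 0)
  (Hv_cv : forall j, (j < N)%nat -> vcv (v j) (vinf j))
  (Halpha : forall j, (j < N)%nat -> Un_cv (fun k => t j k / t 0%nat k) (alpha j))
  (xk : nat -> Vec n)
  (Hxk : forall k, xk k = vadd x (vsum N (fun j => vscale (t j k) (v j k))))
  (Hdom : in_dom J x) (Hsub : exists p, subdiff J x p)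
  (g : nat -> Vec n)
  (Hg : forall k, has_gradient (hopf N H J (fun j => t j k)) (xk k) (g k)) :
  vbounded g /\ (forall c, cluster_point g c -> subdiff J x c).
Proof.
  assert (HN : (0 < N)%nat) by (destruct Hstrict as [j [Hj _]]; lia).
  destruct (fin_lb n N H) as [L [HL0 HL]].
  { intros j Hj. destruct (HH j Hj). apply convex_coercive_lb; auto. }
  destruct Hsub as [p0 [a [Ha Hsa]]].
  destruct (leg_subdiff n J x p0 a Ha Hsa) as [w0 [Hw0 Hw0le]].
  set (rho := rsum N (fun j => Rabs (alpha j) + 1)).
  set (V := rsum N (fun j => vnorm (vinf j) + 1)).
  set (Hp := rsum N (fun j => Rabs (H j p0))).
  assert (Hrho : forall j, (j < N)%nat -> Rabs (alpha j) + 1 <= rho).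
  { intros j Hj. apply (rsum_ge_term N (fun j => Rabs (alpha j) + 1)); auto.
    intros; pose proof (Rabs_pos (alpha j0)); lra. }
  assert (HV : forall j, (j < N)%nat -> vnorm (vinf j) + 1 <= V).
  { intros j Hj. apply (rsum_ge_term N (fun j => vnorm (vinf j) + 1)); auto.
    intros; pose proof (vnorm_nonneg n (vinf j0)); lra. }
  assert (HHp : forall j, (j < N)%nat -> Rabs (H j p0) <= Hp).
  { intros j Hj. apply (rsum_ge_term N (fun j => Rabs (H j p0))); auto.
    intros; apply Rabs_pos. }
  assert (rho_pos : 0 <= rho) by (pose proof (Hrho 0%nat HN); pose proof (Rabs_pos (alpha 0%nat)); lra).
  assert (V_pos : 0 <= V) by (pose proof (HV 0%nat HN); pose proof (vnorm_nonneg n (vinf 0%nat)); lra).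
  assert (Hp_pos : 0 <= Hp) by (pose proof (HHp 0%nat HN); pose proof (Rabs_pos (H 0%nat p0)); lra).
  destruct (ev_all (fun j k => t j k <= rho * t 0%nat k /\ vnorm (v j k) <= V) N) as [K1 HK1].
  { intros j Hj.
    destruct (Halpha j Hj 1 ltac:(lra)) as [Ka HKa].
    destruct (Hv_cv j Hj 1 ltac:(lra)) as [Kv HKv].
    exists (max Ka Kv). intros k Hk. split.
    - specialize (HKa k ltac:(lia)). unfold R_dist in HKa.
      pose proof (Rle_abs (t j k / t 0%nat k - alpha j)) as E1. pose proof (Rle_abs (alpha j)) as E2.
      specialize (Hrho j Hj). pose proof (Ht_pos 0%nat k HN) as E3.
      assert (E4 : t j k / t 0%nat k <= rho) by lra.
      unfold Rdiv in E4. apply Rmult_le_compat_r with (r := t 0%nat k) in E4; [|lra].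
      rewrite Rmult_assoc, Rinv_l in E4 by lra. lra.
    - specialize (HKv k ltac:(lia)).
      replace (v j k) with (vadd (vsub (v j k) (vinf j)) (vinf j))
        by (extensionality i; unfold vadd, vsub; ring).
      pose proof (vnorm_add n (vsub (v j k) (vinf j)) (vinf j)). specialize (HV j Hj). lra. }
  set (W := INR N * rho * V + 1).
  assert (W_pos : 0 <= W) by (unfold W; pose proof (pos_INR N); pose proof (Rmult_le_pos _ _ (Rmult_le_pos _ _ H0 rho_pos) V_pos); lra).
  destruct (HH 0%nat HN) as [_ Hco]. destruct (Hco W) as [R0 HR0].
  set (C := Rabs R0 * W + L).
  assert (HC : forall p u s, 0 < s -> vnorm u <= W * s -> dot n p u - s * H 0%nat p <= s * C).
  { intros p u s Hs Hu. pose proof (cs n p u). pose proof (vnorm_nonneg n p).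
    pose proof (HL 0%nat HN p).
    destruct (Rle_lt_dec R0 (vnorm p)) as [Hp1|Hp1].
    - specialize (HR0 p Hp1).
      assert (vnorm p * vnorm u <= vnorm p * (W * s)) by (apply Rmult_le_compat_l; lra).
      assert (dot n p u <= s * (W * vnorm p)) by nra.
      assert (0 <= s * C).
      { unfold C. pose proof (Rabs_pos R0). apply Rmult_le_pos; [lra|]. nra. }
      nra.
    - pose proof (Rle_abs R0). pose proof (vnorm_nonneg n u).
      assert (vnorm p * vnorm u <= vnorm p * (W * s)) by (apply Rmult_le_compat_l; lra).
      assert (vnorm p * (W * s) <= Rabs R0 * (W * s)) by (apply Rmult_le_compat_r; nra).
      assert (dot n p u <= s * (Rabs R0 * W)) by nra.
      unfold C. nra. }
  assert (Hsumv : forall k, (K1 <= k)%nat ->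
            vnorm (vsum N (fun j => vscale (t j k) (v j k))) <= INR N * rho * V * t 0%nat k).
  { intros k Hk. eapply Rle_trans; [apply vsum_norm|].
    replace (INR N * rho * V * t 0%nat k) with (rsum N (fun _ => rho * t 0%nat k * V))
      by (rewrite rsum_const; ring).
    apply rsum_le. intros j Hj. rewrite vnorm_scale, Rabs_right by (pose proof (Ht_pos j k Hj); lra).
    destruct (HK1 j Hj k Hk). pose proof (Ht_pos j k Hj). pose proof (vnorm_nonneg n (v j k)).
    apply Rmult_le_compat; lra. }
  assert (Hsumt : forall k, (K1 <= k)%nat -> rsum N (fun j => t j k) <= INR N * rho * t 0%nat k).
  { intros k Hk. replace (INR N * rho * t 0%nat k) with (rsum N (fun _ => rho * t 0%nat k))
      by (rewrite rsum_const; ring).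
    apply rsum_le. intros j Hj. apply (HK1 j Hj k Hk). }
  assert (HTp0 : forall k, (K1 <= k)%nat -> Tsum N H (fun j => t j k) p0 <= INR N * rho * Hp * t 0%nat k).
  { intros k Hk. unfold Tsum.
    replace (INR N * rho * Hp * t 0%nat k) with (rsum N (fun _ => rho * t 0%nat k * Hp))
      by (rewrite rsum_const; ring).
    apply rsum_le. intros j Hj. destruct (HK1 j Hj k Hk). pose proof (Ht_pos j k Hj).
    pose proof (Rle_abs (H j p0)). specialize (HHp j Hj).
    apply Rle_trans with (t j k * Rabs (H j p0)); [nra|].
    apply Rmult_le_compat; try lra. apply Rabs_pos. }
  assert (HTlow : forall k p, Tsum N H (fun j => t j k) p >= t 0%nat k * H 0%nat p - L * rsum N (fun j => t j k)).
  { intros k p. unfold Tsum.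
    assert (t 0%nat k * (H 0%nat p + L) <= rsum N (fun j => t j k * (H j p + L))).
    { apply (rsum_ge_term N (fun j => t j k * (H j p + L))); auto.
      intros j Hj. pose proof (Ht_pos j k Hj). pose proof (HL j Hj p). nra. }
    replace (rsum N (fun j => t j k * (H j p + L)))
      with (rsum N (fun j => t j k * H j p) + L * rsum N (fun j => t j k)) in H0.
    2:{ rewrite <- rsum_scal, <- rsum_plus. f_equal. extensionality j. ring. }
    pose proof (Ht_pos 0%nat k HN). nra. }
  set (D := C + L * (INR N * rho) + vnorm p0 * (INR N * rho * V) + INR N * rho * Hp).
  assert (Key : forall k, (K1 <= k)%nat -> forall y b u, J y = Some b -> vnorm u <= t 0%nat k ->
            dot n (g k) (vadd (vsub y x) u) <= b - a + t 0%nat k * D).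
  { intros k Hk y b u Hy Hu.
    set (sv := vsum N (fun j => vscale (t j k) (v j k))).
    pose proof (Ht_pos 0%nat k HN) as Ht0.
    destruct (Hg k) as [ak [Hak Hgk]].
    assert (Hak_lb : a + dot n p0 sv - Tsum N H (fun j => t j k) p0 <= ak).
    { pose proof (hopf_ge n N H J (fun j => t j k) (xk k) p0 w0 ak Hw0 Hak).
      rewrite Hxk, dot_add_r in H0. fold sv in H0. lra. }
    destruct (hopf_le n N H J (fun j => t j k) (vadd (xk k) (vadd (vsub y x) u))
                (b + t 0%nat k * (C + L * (INR N * rho))) p0 w0 Hw0) as [s [Hs Hsle]].
    { intros p w Hw. pose proof (leg_ge n J p w y b Hw Hy).
      assert (Hz : vadd (xk k) (vadd (vsub y x) u) = vadd y (vadd sv u)).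
      { rewrite Hxk. extensionality i. unfold vadd, vsub, sv. ring. }
      rewrite Hz, dot_add_r.
      assert (vnorm (vadd sv u) <= W * t 0%nat k).
      { pose proof (vnorm_add n sv u). pose proof (Hsumv k Hk). fold sv in H2. unfold W. lra. }
      pose proof (HC p (vadd sv u) (t 0%nat k) Ht0 H1).
      pose proof (HTlow k p). pose proof (Hsumt k Hk).
      assert (L * rsum N (fun j => t j k) <= L * (INR N * rho * t 0%nat k)) by (apply Rmult_le_compat_l; lra).
      lra. }
    pose proof (grad_sub n _ (xk k) (g k) ak (vadd (vsub y x) u) s
                 (hopf_convex n N H J (fun j => t j k)) (Hg k) Hak Hs).
    pose proof (cs_abs n p0 sv). pose proof (Rle_abs (- dot n p0 sv)). rewrite Rabs_Ropp in H2.
    pose proof (Hsumv k Hk). fold sv in H3. pose proof (HTp0 k Hk). pose proof (vnorm_nonneg n p0).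
    assert (vnorm p0 * vnorm sv <= vnorm p0 * (INR N * rho * V * t 0%nat k)) by (apply Rmult_le_compat_l; lra).
    unfold D. nra. }
  split.
  - destruct (fin_bound K1 (fun k => vnorm (g k))) as [M0 HM0].
    exists (Rmax (Rmax D 0) M0). intro k.
    destruct (Compare_dec.le_lt_dec K1 k) as [Hk|Hk].
    + apply Rle_trans with (Rmax D 0); [|apply Rmax_l].
      destruct (Req_dec (vnorm (g k)) 0) as [Hz|Hz]; [rewrite Hz; apply Rmax_r|].
      pose proof (vnorm_nonneg n (g k)). pose proof (Ht_pos 0%nat k HN).
      set (u := vscale (t 0%nat k / vnorm (g k)) (g k)).
      assert (Hu : vnorm u = t 0%nat k).
      { unfold u. rewrite vnorm_scale, Rabs_right.
        - field; lra.
        - apply Rle_ge, Rlt_le, Rdiv_lt_0_compat; lra. }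
      specialize (Key k Hk x a u Ha ltac:(lra)).
      rewrite dot_add_r, dot_sub_r in Key. unfold u in Key. rewrite dot_scale_r, <- vnorm_sq in Key.
      replace (t 0%nat k / vnorm (g k) * (vnorm (g k) * vnorm (g k))) with (t 0%nat k * vnorm (g k))
        in Key by (field; lra).
      assert (t 0%nat k * vnorm (g k) <= t 0%nat k * D) by lra.
      apply Rmult_le_reg_l in H2; [|lra]. apply Rle_trans with D; [lra|apply Rmax_l].
    + apply Rle_trans with M0; [apply HM0; auto| apply Rmax_r].
  - intros c Hc. exists a. split; auto. intros y b Hy.
    destruct (Rle_lt_dec (a + dot n c (vsub y x)) b) as [Hle|Hlt]; auto. exfalso.
    set (del := a + dot n c (vsub y x) - b).
    assert (Hdel : 0 < del) by (unfold del; lra).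
    destruct (Ht_cv 0%nat HN (del / (3 * (Rabs D + 1)))) as [K2 HK2].
    { apply Rdiv_lt_0_compat; [lra|]. pose proof (Rabs_pos D); lra. }
    pose proof (vnorm_nonneg n (vsub y x)).
    destruct (Hc (del / (3 * (vnorm (vsub y x) + 1))) ltac:(apply Rdiv_lt_0_compat; lra) (max K1 K2))
      as [k [Hk Hgk]].
    specialize (Key k ltac:(lia) y b vzero Hy).
    rewrite vnorm_zero in Key. pose proof (Ht_pos 0%nat k HN).
    specialize (Key ltac:(lra)). rewrite dot_add_r, dot_zero_r, Rplus_0_r in Key.
    specialize (HK2 k ltac:(lia)). unfold R_dist in HK2. rewrite Rminus_0_r, Rabs_right in HK2 by lra.
    pose proof (cs_abs n (vsub (g k) c) (vsub y x)). rewrite dot_sub_l in H2.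
    pose proof (Rle_abs (- (dot n (g k) (vsub y x) - dot n c (vsub y x)))). rewrite Rabs_Ropp in H3.
    assert (vnorm (vsub (g k) c) * vnorm (vsub y x) <= del / (3 * (vnorm (vsub y x) + 1)) * vnorm (vsub y x))
      by (apply Rmult_le_compat_r; lra).
    assert (del / (3 * (vnorm (vsub y x) + 1)) * vnorm (vsub y x) <= del / 3).
    { unfold Rdiv. apply Rmult_le_reg_r with (3 * (vnorm (vsub y x) + 1)); [lra|].
      field_simplify; nra. }
    assert (t 0%nat k * D <= del / 3).
    { pose proof (Rle_abs D). pose proof (Rabs_pos D).
      assert (t 0%nat k * (3 * (Rabs D + 1)) < del).
      { apply Rmult_lt_reg_r with (/ (3 * (Rabs D + 1))).
        - apply Rinv_0_lt_compat; lra.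
        - rewrite Rmult_assoc, Rinv_r by lra. lra. }
      nra. }
    unfold del in *. lra.
Qed.
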